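(* Consider the finite-difference scheme described in the context, with grid parameters $T>0$, $M,N\ge 2$, $\tau=T/M$, $h=1/N$, nonnegative constants $\beta,\gamma,\delta,\mu$, $\varepsilon\in[0,1]$, diffusion constants $\sigma_i>0$, and given grid strategy values $\alpha^i_{k,j}$ with $\alpha^i_{k,0}=\alpha^i_{k,N}=0$, satisfying $h^2\le 4\tau\sigma_i^2$ and $\tau|\alpha^i_{k,j}|\le h/4$ for all $i,k,j$. Then for each $i\in\{S,I,R,C\}$ the solution satisfies $$\max_{0\le k\le M}\|m^{i,h}(t_k,\cdot)\|_{1,h}\le \|m^i_0(\cdot)\|_{1,h}+T\max_{0\le k\le M}\|f^{i,h}(t_k,\cdot)\|_{1,h},$$ where for a grid function $w$ on the points $x_{j+1/2}$, $\|w\|_{1,h}:=\sum_{j=0}^{N-1}|w_{j+1/2}|\,h$, $m^{i,h}(t_k,\cdot)=(m^{i,h}_{k,j+1/2})_{j}$, $m^i_0(\cdot)=(m^i_0(x_{j+1/2}))_j$, and $f^{i,h}(t_k,\cdot)=(f^{i,h}_{k,j+1/2})_j$.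
   Context: Grid: $t_k=k\tau$ ($k=0,\dots,M$), $x_j=jh$ ($j=0,\dots,N$), $x_{j+1/2}=(j+1/2)h$. The four compartments are $i\in\{S,I,R,C\}$. Grid strategy values $\alpha^i_{k,j}$ are given for $k=0,\dots,M$, $j=0,\dots,N$. For $k=1,\dots,M$, $j=0,\dots,N-1$ define $$\gamma^{i,1}_{k,j+1/2}=\tfrac{1}{8\tau}\big(1+\tfrac{4\tau}{h}\alpha^i_{k,j}\big),\quad \gamma^{i,2}_{k,j+1/2}=\tfrac{1}{8\tau}\big(3+\tfrac{4\tau}{h}\alpha^i_{k,j}\big)+\tfrac{1}{8\tau}\big(3-\tfrac{4\tau}{h}\alpha^i_{k,j+1}\big),\quad \gamma^{i,3}_{k,j+1/2}=\tfrac{1}{8\tau}\big(1-\tfrac{4\tau}{h}\alpha^i_{k,j+1}\big).$$ Unknowns are $m^{i,h}_{k,j+1/2}$, $k=0,\dots,M$, $j=0,\dots,N-1$, extended by ghost values (boundary condition) $m^{i,h}_{k,-1/2}:=m^{i,h}_{k,1/2}$, $m^{i,h}_{k,N+1/2}:=m^{i,h}_{k,N-1/2}$. Initial condition: $m^{i,h}_{0,j+1/2}=m^i_0(x_{j+1/2})$ for given functions $m^i_0$ on $[0,1]$. For $k=1,\dots,M$, $j=0,\dots,N-1$, each $i$: $$\Big(\tfrac{1}{8\tau}-\tfrac{\sigma_i^2}{2h^2}\Big)m^{i,h}_{k,j-1/2}+\Big(\tfrac{3}{4\tau}+\tfrac{\sigma_i^2}{h^2}\Big)m^{i,h}_{k,j+1/2}+\Big(\tfrac{1}{8\tau}-\tfrac{\sigma_i^2}{2h^2}\Big)m^{i,h}_{k,j+3/2}$$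 $$= f^{i,h}_{k-1,j+1/2}+\gamma^{i,1}_{k,j+1/2}m^{i,h}_{k-1,j-1/2}+\gamma^{i,2}_{k,j+1/2}m^{i,h}_{k-1,j+1/2}+\gamma^{i,3}_{k,j+1/2}m^{i,h}_{k-1,j+3/2},$$ where for every $k=0,\dots,M$, writing $m^i$ for $m^{i,h}_{k,j+1/2}$: $f^{S,h}_{k,j+1/2}=-\beta m^S m^I+\mu m^C$; $f^{I,h}_{k,j+1/2}=\beta m^S m^I+\varepsilon\beta m^C m^I-\gamma m^I$; $f^{R,h}_{k,j+1/2}=(1-\varepsilon)\beta m^C m^I+\gamma m^I-\delta m^R$; $f^{C,h}_{k,j+1/2}=\delta m^R-\beta m^C m^I-\mu m^C$. *)

(* Defs.v *)
From Stdlib Require Import Reals Lra Lia.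
Open Scope R_scope.

Inductive compt : Type := cS | cI | cR | cC.

(* Grid functions: [m i k j] stands for m^{i,h}_{k,j+1/2} (j = 0..N-1);
   [alpha i k j] stands for alpha^i_{k,j} (j = 0..N). *)

Fixpoint sumN (n : nat) (g : nat -> R) : R :=
  match n with O => 0 | S n' => sumN n' g + g n' end.

Fixpoint maxUpTo (M : nat) (g : nat -> R) : R :=
  match M with O => g O | S M' => Rmax (maxUpTo M' g) (g (S M')) end.

Definition norm1h (N : nat) (w : nat -> R) : R :=
  sumN N (fun j => Rabs (w j) * (1 / INR N)).

Definition xmid (N j : nat) : R := (INR j + 1/2) * (1 / INR N).

(* ghost values: m_{k,-1/2} := m_{k,1/2},  m_{k,N+1/2} := m_{k,N-1/2} *)
Definition mLeft (m : nat -> R) (j : nat) : R :=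
  match j with O => m O | S j' => m j' end.
Definition mRight (N : nat) (m : nat -> R) (j : nat) : R :=
  if Nat.eqb (S j) N then m (N - 1)%nat else m (S j).

Definition freact (beta gamma delta mu eps : R) (m : compt -> nat -> nat -> R)
  (i : compt) (k j : nat) : R :=
  let mS := m cS k j in let mI := m cI k j in
  let mR := m cR k j in let mC := m cC k j in
  match i with
  | cS => - beta * mS * mI + mu * mC
  | cI => beta * mS * mI + eps * beta * mC * mI - gamma * mI
  | cR => (1 - eps) * beta * mC * mI + gamma * mI - delta * mR
  | cC => delta * mR - beta * mC * mI - mu * mC
  end.

Definition gam1 (tau h a0 : R) : R := 1 / (8 * tau) * (1 + 4 * tau / h * a0).
Definition gam2 (tau h a0 a1 : R) : R :=
  1 / (8 * tau) * (3 + 4 * tau / h * a0) + 1 / (8 * tau) * (3 - 4 * tau / h * a1).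
Definition gam3 (tau h a1 : R) : R := 1 / (8 * tau) * (1 - 4 * tau / h * a1).

Definition scheme_solution (T : R) (M N : nat) (beta gamma delta mu eps : R)
  (sigma : compt -> R) (alpha : compt -> nat -> nat -> R) (m0 : compt -> R -> R)
  (m : compt -> nat -> nat -> R) : Prop :=
  let tau := T / INR M in
  let h := 1 / INR N in
  (forall i j, (j < N)%nat -> m i O j = m0 i (xmid N j)) /\
  (forall i k j, (1 <= k <= M)%nat -> (j < N)%nat ->
     (1 / (8 * tau) - sigma i ^ 2 / (2 * h ^ 2)) * mLeft (m i k) j
     + (3 / (4 * tau) + sigma i ^ 2 / h ^ 2) * m i k j
     + (1 / (8 * tau) - sigma i ^ 2 / (2 * h ^ 2)) * mRight N (m i k) j
     = freact beta gamma delta mu eps m i (k - 1)%nat j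
       + gam1 tau h (alpha i k j) * mLeft (m i (k - 1)%nat) j
       + gam2 tau h (alpha i k j) (alpha i k (S j)) * m i (k - 1)%nat j
       + gam3 tau h (alpha i k (S j)) * mRight N (m i (k - 1)%nat) j).

(* Main.v *)
Require Import Defs.
From Stdlib Require Import Reals Lra Lia.
Open Scope R_scope.

Lemma sumN_plus n f g : sumN n (fun j => f j + g j) = sumN n f + sumN n g.
Proof. induction n; simpl; [ring| rewrite IHn; ring]. Qed.
Lemma sumN_scal n c f : sumN n (fun j => c * f j) = c * sumN n f.
Proof. induction n; simpl; [ring| rewrite IHn; ring]. Qed.
Lemma sumN_ext n f g : (forall j, (j < n)%nat -> f j = g j) -> sumN n f = sumN n g.
Proof. induction n; intros H; simpl; auto. rewrite IHn by (intros; apply H; lia). rewrite (H n) by lia; auto. Qed.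
Lemma sumN_le n f g : (forall j, (j < n)%nat -> f j <= g j) -> sumN n f <= sumN n g.
Proof. induction n; intros H; simpl; [lra|]. assert (H1:=H n ltac:(lia)). assert (sumN n f <= sumN n g) by (apply IHn; intros; apply H; lia). lra. Qed.
Lemma sumN_shift n f : sumN (S n) f = f O + sumN n (fun j => f (S j)).
Proof. induction n; simpl in *; [ring|]. rewrite IHn. ring. Qed.
Lemma sumN_nonneg n f : (forall j, (j < n)%nat -> 0 <= f j) -> 0 <= sumN n f.
Proof. intros H. replace 0 with (sumN n (fun _ => 0)). apply sumN_le; auto. clear; induction n; simpl; auto; rewrite IHn; ring. Qed.

Lemma sumL n (F : nat -> R -> R) u :
  sumN (S n) (fun j => F j (mLeft u j)) = F O (u O) + sumN n (fun j => F (S j) (u j)).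
Proof. rewrite sumN_shift. reflexivity. Qed.

Lemma sumR n (F : nat -> R -> R) u :
  sumN (S n) (fun j => F j (mRight (S n) u j)) = sumN n (fun j => F j (u (S j))) + F n (u n).
Proof. simpl sumN at 1. f_equal.
  - apply sumN_ext. intros j Hj. unfold mRight. destruct (Nat.eqb (S j) (S n)) eqn:E; auto.
    apply Nat.eqb_eq in E. lia.
  - unfold mRight. rewrite Nat.eqb_refl. f_equal. f_equal. lia.
Qed.

Lemma keyA n u :
  sumN (S n) (fun j => Rabs (mLeft u j) + Rabs (mRight (S n) u j)) = 2 * sumN (S n) (fun j => Rabs (u j)).
Proof.
  rewrite sumN_plus.
  rewrite (sumL n (fun _ x => Rabs x)). rewrite (sumR n (fun _ x => Rabs x)).
  pose proof (sumN_shift n (fun j => Rabs (u j))) as E. simpl sumN in E|-*. cbv beta in E. lra.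
Qed.

Lemma keyB n tau h (A u : nat -> R) : A O = 0 -> A (S n) = 0 ->
  sumN (S n) (fun j => gam1 tau h (A j) * mLeft u j + gam2 tau h (A j) (A (S j)) * u j
     + gam3 tau h (A (S j)) * mRight (S n) u j) = 8 * (1/(8*tau)) * sumN (S n) u.
Proof.
  intros H0 HN. rewrite !sumN_plus.
  rewrite (sumL n (fun j x => gam1 tau h (A j) * x)).
  rewrite (sumR n (fun j x => gam3 tau h (A (S j)) * x)).
  rewrite (sumN_shift n (fun j => gam3 tau h (A j) * u j)) at 1 || idtac.
  set (G := fun p => gam3 tau h (A p) * u p).
  change (sumN n (fun j => gam3 tau h (A (S j)) * u (S j))) with (sumN n (fun j => G (S j))).
  assert (E: sumN n (fun j => G (S j)) = sumN n G + G n - G O).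
  { pose proof (sumN_shift n G) as E. simpl sumN in E at 1. lra. }
  rewrite E. simpl sumN. unfold G.
  assert (E2: sumN n (fun j => gam1 tau h (A (S j)) * u j) + sumN n (fun j => gam2 tau h (A j) (A (S j)) * u j)
     + sumN n (fun j => gam3 tau h (A j) * u j) = 8 * (1/(8*tau)) * sumN n u).
  { rewrite <- !sumN_plus, <- sumN_scal. apply sumN_ext. intros. unfold gam1, gam2, gam3. ring. }
  rewrite H0, HN in *. unfold gam1, gam2, gam3 in *. lra.
Qed.

Lemma coef_bound tau h x : 0 < tau -> 0 < h -> tau * Rabs x <= h / 4 -> -1 <= 4 * tau / h * x <= 1.
Proof.
  intros Ht Hh Hb.
  assert (E: 4 * tau / h * x = (4 * tau * x) * / h) by (field; lra).
  rewrite E. assert (Hi: 0 < / h) by (apply Rinv_0_lt_compat; lra).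
  assert (Hhi: h * / h = 1) by (field; lra).
  unfold Rabs in Hb; destruct (Rcase_abs x); split; nra.
Qed.

Lemma abs3 x y z : Rabs (x + y + z) <= Rabs x + Rabs y + Rabs z.
Proof. pose proof (Rabs_triang (x+y) z). pose proof (Rabs_triang x y). lra. Qed.

Lemma absL u j : Rabs (mLeft u j) = mLeft (fun j => Rabs (u j)) j.
Proof. destruct j; reflexivity. Qed.
Lemma absR N u j : Rabs (mRight N u j) = mRight N (fun j => Rabs (u j)) j.
Proof. unfold mRight; destruct (Nat.eqb (S j) N); reflexivity. Qed.

Lemma step n tau h sig (f uo un A : nat -> R) :
  0 < tau -> 0 < h -> h ^ 2 <= 4 * tau * sig ^ 2 -> A O = 0 -> A (S n) = 0 ->
  (forall j, (j <= S n)%nat -> tau * Rabs (A j) <= h / 4) ->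
  (forall j, (j < S n)%nat ->
     (1 / (8 * tau) - sig ^ 2 / (2 * h ^ 2)) * mLeft un j
     + (3 / (4 * tau) + sig ^ 2 / h ^ 2) * un j
     + (1 / (8 * tau) - sig ^ 2 / (2 * h ^ 2)) * mRight (S n) un j
     = f j + gam1 tau h (A j) * mLeft uo j + gam2 tau h (A j) (A (S j)) * uo j
       + gam3 tau h (A (S j)) * mRight (S n) uo j) ->
  sumN (S n) (fun j => Rabs (un j)) <= sumN (S n) (fun j => Rabs (uo j)) + tau * sumN (S n) (fun j => Rabs (f j)).
Proof.
  intros Ht Hh Hs H0 HN Hb Heq.
  set (a := 1 / (8 * tau) - sig ^ 2 / (2 * h ^ 2)).
  set (d := 3 / (4 * tau) + sig ^ 2 / h ^ 2).
  set (g := fun j => f j + gam1 tau h (A j) * mLeft uo j + gam2 tau h (A j) (A (S j)) * uo j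
       + gam3 tau h (A (S j)) * mRight (S n) uo j).
  assert (Ha : a <= 0).
  { assert (E: a = - ((4 * tau * sig ^ 2 - h ^ 2) * / (8 * tau * h ^ 2))) by (unfold a; field; lra).
    rewrite E. assert (0 <= (4 * tau * sig ^ 2 - h ^ 2) * / (8 * tau * h ^ 2)); [|lra].
    apply Rmult_le_pos; [lra|]. left. apply Rinv_0_lt_compat. 
    assert (0 < h^2) by (apply pow_lt; lra). nra. }
  assert (Hd : d + 2 * a = 1 / tau) by (unfold a, d; field; lra).
  assert (Hdpos : 0 < d).
  { unfold d. assert (0 < 3 / (4*tau)) by (apply Rdiv_lt_0_compat; lra).
    assert (0 <= sig ^ 2 / h ^ 2). { unfold Rdiv; apply Rmult_le_pos; [apply pow2_ge_0|left; apply Rinv_0_lt_compat; apply pow_lt; lra]. }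
    lra. }
  assert (PA : sumN (S n) (fun j => Rabs (un j)) <= tau * sumN (S n) (fun j => Rabs (g j))).
  { assert (Hj : forall j, (j < S n)%nat -> d * Rabs (un j) <= Rabs (g j) + (- a) * (Rabs (mLeft un j) + Rabs (mRight (S n) un j))).
    { intros j Hj. assert (Heq2 : a * mLeft un j + d * un j + a * mRight (S n) un j = g j) by (unfold g; apply Heq; auto). clear Heq.
      assert (E: d * un j = g j + (- a * mLeft un j) + (- a * mRight (S n) un j)) by lra.
      assert (E2: d * Rabs (un j) = Rabs (d * un j)) by (rewrite Rabs_mult, (Rabs_pos_eq d); lra).
      rewrite E2, E. eapply Rle_trans; [apply abs3|]. rewrite !Rabs_mult, (Rabs_pos_eq (-a)) by lra. lra. }
    apply sumN_le in Hj. rewrite sumN_scal, sumN_plus, sumN_scal, keyA in Hj.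
    assert (Hk: (d + 2 * a) * sumN (S n) (fun j => Rabs (un j)) <= sumN (S n) (fun j => Rabs (g j))) by lra.
    rewrite Hd in Hk. 
    assert (E: sumN (S n) (fun j => Rabs (un j)) = tau * (1 / tau * sumN (S n) (fun j => Rabs (un j)))) by (field; lra).
    rewrite E. apply Rmult_le_compat_l; lra. }
  assert (PB : sumN (S n) (fun j => Rabs (g j)) <= sumN (S n) (fun j => Rabs (f j)) + 1 / tau * sumN (S n) (fun j => Rabs (uo j))).
  { set (v := fun j => Rabs (uo j)).
    assert (Hj : forall j, (j < S n)%nat -> Rabs (g j) <= Rabs (f j) + (gam1 tau h (A j) * mLeft v j + gam2 tau h (A j) (A (S j)) * v j
     + gam3 tau h (A (S j)) * mRight (S n) v j)).
    { intros j Hj. unfold g.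
      pose proof (coef_bound tau h (A j) Ht Hh (Hb j ltac:(lia))).
      pose proof (coef_bound tau h (A (S j)) Ht Hh (Hb (S j) ltac:(lia))).
      assert (He: 0 < 1 / (8 * tau)) by (apply Rdiv_lt_0_compat; lra).
      assert (G1: 0 <= gam1 tau h (A j)) by (unfold gam1; apply Rmult_le_pos; lra).
      assert (G2: 0 <= gam2 tau h (A j) (A (S j))) by (unfold gam2; nra).
      assert (G3: 0 <= gam3 tau h (A (S j))) by (unfold gam3; apply Rmult_le_pos; lra).
      unfold v. rewrite <- absL, <- absR.
      pose proof (Rabs_triang (f j + gam1 tau h (A j) * mLeft uo j + gam2 tau h (A j) (A (S j)) * uo j) (gam3 tau h (A (S j)) * mRight (S n) uo j)).
      pose proof (abs3 (f j) (gam1 tau h (A j) * mLeft uo j) (gam2 tau h (A j) (A (S j)) * uo j)).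
      rewrite !Rabs_mult in *. rewrite !(Rabs_pos_eq (gam1 _ _ _)), (Rabs_pos_eq (gam2 _ _ _ _)), (Rabs_pos_eq (gam3 _ _ _)) in * by lra.
      lra. }
    apply sumN_le in Hj. rewrite sumN_plus, keyB in Hj by auto.
    assert (8 * (1 / (8 * tau)) = 1 / tau) by (field; lra). rewrite H in Hj. lra. }
  assert (0 <= tau) by lra.
  apply Rmult_le_compat_l with (r := tau) in PB; [|lra].
  assert (E: tau * (sumN (S n) (fun j => Rabs (f j)) + 1 / tau * sumN (S n) (fun j => Rabs (uo j)))
    = sumN (S n) (fun j => Rabs (uo j)) + tau * sumN (S n) (fun j => Rabs (f j))) by (field; lra).
  lra.
Qed.

Lemma maxUpTo_ge M g k : (k <= M)%nat -> g k <= maxUpTo M g.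
Proof. induction M; intros H; simpl.
  - replace k with O by lia. lra.
  - destruct (Nat.eq_dec k (S M)). subst. apply Rmax_r.
    eapply Rle_trans; [apply IHM; lia| apply Rmax_l]. Qed.
Lemma maxUpTo_le M g B : (forall k, (k <= M)%nat -> g k <= B) -> maxUpTo M g <= B.
Proof. induction M; intros H; simpl. apply H; lia.
  apply Rmax_lub. apply IHM; intros; apply H; lia. apply H; lia. Qed.

Lemma norm1h_eq N w : norm1h N w = 1 / INR N * sumN N (fun j => Rabs (w j)).
Proof. unfold norm1h. rewrite <- sumN_scal. apply sumN_ext. intros; ring. Qed.

Theorem proposition2 (T : R) (M N : nat) (beta gamma delta mu eps : R)
  (sigma : compt -> R) (alpha : compt -> nat -> nat -> R) (m0 : compt -> R -> R)
  (m : compt -> nat -> nat -> R) :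
  0 < T -> (2 <= M)%nat -> (2 <= N)%nat ->
  0 <= beta -> 0 <= gamma -> 0 <= delta -> 0 <= mu -> 0 <= eps <= 1 ->
  (forall i, 0 < sigma i) ->
  (forall i k, (k <= M)%nat -> alpha i k O = 0 /\ alpha i k N = 0) ->
  (forall i, (1 / INR N) ^ 2 <= 4 * (T / INR M) * sigma i ^ 2) ->
  (forall i k j, (k <= M)%nat -> (j <= N)%nat ->
     (T / INR M) * Rabs (alpha i k j) <= (1 / INR N) / 4) ->
  scheme_solution T M N beta gamma delta mu eps sigma alpha m0 m ->
  forall i : compt,
    maxUpTo M (fun k => norm1h N (m i k))
    <= norm1h N (fun j => m0 i (xmid N j))
       + T * maxUpTo M (fun k => norm1h N (fun j => freact beta gamma delta mu eps m i k j)).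
Proof.
  intros HT HM HN _ _ _ _ _ Hsig Hal Hh Hab Hs i.
  unfold scheme_solution in Hs. cbv zeta in Hs. destruct Hs as [Hin Hk].
  set (tau := T / INR M) in *. set (h := 1 / INR N) in *.
  set (F := maxUpTo M (fun k => norm1h N (fun j => freact beta gamma delta mu eps m i k j))).
  assert (HMp : 0 < INR M) by (apply lt_0_INR; lia).
  assert (HNp : 0 < INR N) by (apply lt_0_INR; lia).
  assert (Htau : 0 < tau) by (unfold tau; apply Rdiv_lt_0_compat; lra).
  assert (Hhp : 0 < h) by (unfold h; apply Rdiv_lt_0_compat; lra).
  assert (Hn0 : forall w, 0 <= norm1h N w).
  { intros w. rewrite norm1h_eq. apply Rmult_le_pos; [left; apply Rdiv_lt_0_compat; lra|]. apply sumN_nonneg; intros; apply Rabs_pos. }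
  assert (HF : 0 <= F) by (eapply Rle_trans; [apply (Hn0 (fun j => freact beta gamma delta mu eps m i 0 j))| unfold F; apply (maxUpTo_ge M (fun k => norm1h N (fun j => freact beta gamma delta mu eps m i k j)) 0); lia]).
  destruct N as [|n]; [lia|].
  assert (Hst : forall k, (1 <= k <= M)%nat ->
     norm1h (S n) (m i k) <= norm1h (S n) (m i (k - 1)%nat) + tau * norm1h (S n) (fun j => freact beta gamma delta mu eps m i (k - 1)%nat j)).
  { intros k Hk1. rewrite !norm1h_eq.
    destruct (Hal i k ltac:(lia)) as [A0 AN].
    pose proof (step n tau h (sigma i) (fun j => freact beta gamma delta mu eps m i (k - 1)%nat j)
       (m i (k-1)%nat) (m i k) (alpha i k) Htau Hhp (Hh i) A0 AN
       (fun j Hj => Hab i k j ltac:(lia) Hj) (fun j Hj => Hk i k j Hk1 Hj)) as P.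
    assert (0 < 1 / INR (S n)) by (apply Rdiv_lt_0_compat; lra).
    apply Rmult_le_compat_l with (r := 1 / INR (S n)) in P; lra. }
  assert (Hind : forall k, (k <= M)%nat -> norm1h (S n) (m i k) <= norm1h (S n) (fun j => m0 i (xmid (S n) j)) + INR k * tau * F).
  { induction k; intros Hk'.
    - simpl. rewrite !norm1h_eq. replace (sumN (S n) (fun j => Rabs (m i 0%nat j))) with (sumN (S n) (fun j => Rabs (m0 i (xmid (S n) j)))). lra.
      apply sumN_ext. intros; rewrite Hin; auto.
    - pose proof (Hst (S k) ltac:(lia)) as P. replace (S k - 1)%nat with k in P by lia.
      pose proof (IHk ltac:(lia)).
      pose proof (maxUpTo_ge M (fun k => norm1h (S n) (fun j => freact beta gamma delta mu eps m i k j)) k ltac:(lia)) as Q.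
      fold F in Q. rewrite S_INR. nra. }
  apply maxUpTo_le. intros k Hk'. eapply Rle_trans; [apply Hind; auto|].
  assert (INR k <= INR M) by (apply le_INR; auto).
  assert (E : INR M * tau = T) by (unfold tau; field; lra).
  assert (INR k * tau * F <= INR M * tau * F). { apply Rmult_le_compat_r; auto. apply Rmult_le_compat_r; lra. }
  rewrite E in H0. fold F. lra.
Qed.
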